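(* Fix $p\in(\tfrac12,1)$ and let $\{B_n\}_{n\ge1}$ be a sequence with $B_n\in\{1,\dots,n\}$ and $\lim_{n\to\infty}B_n/n=q$ for some $q\in[0,1]$. Then $$\lim_{n\to\infty}\lambda(B_n,n)=\begin{cases}0 & \text{if } q\le 1-p,\\ \dfrac{q-(1-p)}{p} & \text{otherwise.}\end{cases}$$
   Context: The crowdfunding game $\Gamma(B,n)$ with parameter $p\in(\tfrac12,1)$: there are $n$ players and a threshold $B\in\{1,\dots,n\}$. A state $\omega\in\{H,L\}$ is drawn with probability $\tfrac12$ each. Conditional on $\omega$, each player $i$ independently receives a signal $s_i\in\{H,L\}$ with $\Pr(s_i=\omega\mid\omega)=p$. Players simultaneously choose $a_i\in\{0,1\}$. Player $i$'s payoff is $1$ if $a_i=1$, $\sum_j a_j\ge B$ and $\omega=H$; $-1$ if $a_i=1$, $\sum_j a_j\ge B$ and $\omega=L$; and $0$ otherwise. A strategy is a map $\sigma_i:\{H,L\}\to[0,1]$ giving the probability of action $1$ after each signal; Bayes-Nash equilibrium is defined as usual. A profile is non-trivial if $\Pr_\sigma(\sum_i a_i\ge B)>0$, and symmetric if all players use the same strategy. It is known that each $\Gamma(B,n)$ has a unique symmetric non-trivial Bayes-Nash equilibrium, and in it every player plays $1$ with probability $1$ after signal $H$ and plays $1$ with probability $\lambda(B,n)\in[0,1)$ after signal $L$; this defines $\lambda(B,n)$. *)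

(* Defs.v *)
From HB Require Import structures.
From mathcomp Require Import all_boot all_order all_algebra.
From mathcomp Require Import all_classical all_reals all_analysis.
Set Implicit Arguments. Unset Strict Implicit. Unset Printing Implicit Defensive.
Import Order.TTheory GRing.Theory Num.Theory.
Local Open Scope ring_scope.

(* Conventions: state / signal / action are booleans.
   state w = true  means  omega = H ;  signal s = true means s_i = H ;
   action a = true means a_i = 1.
   A strategy is a map bool -> R giving Pr(a_i = 1 | s_i). *)

Section Crowdfunding.
Variable R : realType.

Definition sig_prob (p : R) (w s : bool) : R := if s == w then p else 1 - p.

Definition act_prob (x : R) (a : bool) : R := if a then x else 1 - x.

Definition funded (B n : nat) (a : {ffun 'I_n -> bool}) : bool :=
  (B <= \sum_(i < n) (a i : nat))%N.

Definition outcome_prob (p : R) (n : nat) (sigma : 'I_n -> bool -> R)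
  (w : bool) (s a : {ffun 'I_n -> bool}) : R :=
  (1 / 2) * (\prod_(i < n) sig_prob p w (s i))
          * (\prod_(i < n) act_prob (sigma i (s i)) (a i)).

Definition payoff (B n : nat) (i : 'I_n) (w : bool) (a : {ffun 'I_n -> bool}) : R :=
  if a i && funded B a then (if w then 1 else -1) else 0.

Definition exp_payoff (p : R) (B n : nat) (sigma : 'I_n -> bool -> R) (i : 'I_n) : R :=
  \sum_(w : bool) \sum_(s : {ffun 'I_n -> bool}) \sum_(a : {ffun 'I_n -> bool})
     outcome_prob p sigma w s a * payoff B i w a.

Definition prob_funded (p : R) (B n : nat) (sigma : 'I_n -> bool -> R) : R :=
  \sum_(w : bool) \sum_(s : {ffun 'I_n -> bool}) \sum_(a : {ffun 'I_n -> bool})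
     outcome_prob p sigma w s a * (if funded B a then 1 else 0).

Definition valid_strategy (tau : bool -> R) : Prop :=
  forall s, 0 <= tau s <= 1.

Definition deviate (n : nat) (sigma : 'I_n -> bool -> R) (i : 'I_n) (tau : bool -> R)
  : 'I_n -> bool -> R := fun j => if j == i then tau else sigma j.

(* Bayes-Nash equilibrium of Gamma(B,n) (ex-ante formulation; since every
   signal has positive probability this is equivalent to interim optimality). *)
Definition is_BNE (p : R) (B n : nat) (sigma : 'I_n -> bool -> R) : Prop :=
  (forall i, valid_strategy (sigma i)) /\
  (forall (i : 'I_n) (tau : bool -> R), valid_strategy tau ->
     exp_payoff p B (deviate sigma i tau) i <= exp_payoff p B sigma i).

Definition nontrivial (p : R) (B n : nat) (sigma : 'I_n -> bool -> R) : Prop :=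
  0 < prob_funded p B sigma.

Definition sym_profile (n : nat) (l : R) : 'I_n -> bool -> R :=
  fun _ s => if s then 1 else l.

(* l = lambda(B,n): (1, l) is the (unique) symmetric non-trivial BNE, l in [0,1) *)
Definition is_lambda (p : R) (B n : nat) (l : R) : Prop :=
  0 <= l < 1 /\ is_BNE p B (@sym_profile n l) /\ nontrivial p B (@sym_profile n l).

End Crowdfunding.

(* Main.v *)
Require Import Defs.
From HB Require Import structures.
From mathcomp Require Import all_boot all_order all_algebra.
From mathcomp Require Import all_classical all_reals all_analysis.
From mathcomp Require Import ring lra zify.
Set Implicit Arguments. Unset Strict Implicit. Unset Printing Implicit Defensive.
Import Order.TTheory GRing.Theory Num.Theory.
Local Open Scope ring_scope.

Definition bin (R : realType) (m : nat) (a : R) (j : nat) : R :=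
  (a ^+ j * (1 - a) ^+ (m - j)) *+ 'C(m, j).

Lemma sum_bin (R : realType) m (a : R) : \sum_(j < m.+1) bin m a j = 1.
Proof.
have := exprDn (1 - a) a m; rewrite subrK expr1n => ->.
by apply: eq_bigr => j _; rewrite /bin mulrC.
Qed.

Lemma bin_ge0 (R : realType) m (a : R) j : 0 <= a <= 1 -> 0 <= bin m a j.
Proof.
case/andP=> a0 a1; rewrite /bin mulrn_wge0 // mulr_ge0 // exprn_ge0 //.
by rewrite subr_ge0.
Qed.

Lemma bin_ratio (R : realType) m (a y : R) j : 0 < y < 1 ->
  bin m a j = bin m y j * ((a / y) ^+ j * ((1 - a) / (1 - y)) ^+ (m - j)).
Proof.
case/andP=> y0 y1.
have y1' : 0 < 1 - y by rewrite subr_gt0.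
have hy : y ^+ j != 0 := expf_neq0 _ (lt0r_neq0 y0).
have hy' : (1 - y) ^+ (m - j) != 0 := expf_neq0 _ (lt0r_neq0 y1').
rewrite /bin !expr_div_n mulrnAl; congr (_ *+ _).
move: hy hy'; move: (y ^+ j) ((1 - y) ^+ (m - j)) (a ^+ j) ((1 - a) ^+ (m - j)).
move=> Y Y' A A' hY hY'.
have -> : Y * Y' * (A / Y * (A' / Y')) = (A / Y * Y) * (A' / Y' * Y') by ring.
by rewrite !divfK.
Qed.

Lemma ratio_mono_up (R : realType) m k j (r s : R) :
  0 <= r <= 1 -> 1 <= s -> (k <= j <= m)%N ->
  r ^+ j * s ^+ (m - j) <= r ^+ k * s ^+ (m - k).
Proof.
case/andP=> r0 r1 s1 /andP[kj jm].
have -> : j = (k + (j - k))%N by rewrite subnKC.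
have -> : (m - k = (m - (k + (j - k))) + (j - k))%N.
  rewrite subnKC //; lia.
rewrite !exprD -mulrA ler_wpM2l ?exprn_ge0 // mulrC ler_wpM2l ?exprn_ge0 //.
  by rewrite (le_trans _ s1).
by rewrite (le_trans (exprn_ile1 _ r0 r1)) // exprn_ege1.
Qed.

Lemma ratio_mono_down (R : realType) m k j (r s : R) :
  1 <= r -> 0 <= s <= 1 -> (j <= k <= m)%N ->
  r ^+ j * s ^+ (m - j) <= r ^+ k * s ^+ (m - k).
Proof.
move=> r1 /andP[s0 s1] /andP[jk km].
have -> : k = (j + (k - j))%N by rewrite subnKC.
have -> : (m - j = (m - (j + (k - j))) + (k - j))%N by lia.
rewrite !exprD -mulrA ler_wpM2l ?exprn_ge0 ?(le_trans _ r1) //.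
rewrite mulrC ler_wpM2r ?exprn_ge0 //.
by rewrite (le_trans (exprn_ile1 _ s0 s1)) // exprn_ege1.
Qed.

Lemma amgm2 (R : realType) (u v : R) k m : 0 <= u -> 0 <= v -> (k <= m)%N -> (0 < m)%N ->
  u ^+ k * v ^+ (m - k) <= ((k%:R * u + (m - k)%:R * v) / m%:R) ^+ m.
Proof.
move=> u0 v0 km m0.
pose E (i : 'I_m) := if (i < k)%N then u else v.
have := (@leif_AGM R 'I_m (fun _ => true) E _).1.
have cA : #|(fun _ : 'I_m => true) : {pred 'I_m}| = m.
  by rewrite -[RHS](card_ord m); apply: eq_card.
rewrite cA.
have -> : \prod_(i in (fun _ : 'I_m => true) : {pred 'I_m}) E i = u ^+ k * v ^+ (m - k).
  rewrite (eq_bigl xpredT) //.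
  rewrite -(big_mkord xpredT (fun i => if (i < k)%N then u else v)).
  rewrite (@big_cat_nat _ _ _ k 0 m _ _ (leq0n k) km) /=.
  rewrite (@eq_big_nat _ _ _ 0 k _ (fun _ => u)); last by move=> i /andP[_ ->].
  rewrite (@eq_big_nat _ _ _ k m _ (fun _ => v)); last first.
    by move=> i /andP[ki _]; rewrite ltnNge ki.
  by rewrite !prodr_const_nat subn0.
have -> : \sum_(i in (fun _ : 'I_m => true) : {pred 'I_m}) E i = k%:R * u + (m - k)%:R * v.
  rewrite (eq_bigl xpredT) //.
  rewrite -(big_mkord xpredT (fun i => if (i < k)%N then u else v)).
  rewrite (@big_cat_nat _ _ _ k 0 m _ _ (leq0n k) km) /=.
  rewrite (@eq_big_nat _ _ _ 0 k _ (fun _ => u)); last by move=> i /andP[_ ->].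
  rewrite (@eq_big_nat _ _ _ k m _ (fun _ => v)); last first.
    by move=> i /andP[ki _]; rewrite ltnNge ki.
  by rewrite !sumr_const_nat subn0 !mulr_natl.
apply; move=> i _; rewrite /E; by case: ifP.
Qed.

Lemma hell_alg (R : realType) (A Y A' Y' : R) :
  0 <= A <= 1 -> 0 <= Y <= 1 -> 0 <= A' -> 0 <= Y' ->
  A ^+ 2 + A' ^+ 2 = 1 -> Y ^+ 2 + Y' ^+ 2 = 1 ->
  A * Y + A' * Y' <= 1 - (A ^+ 2 - Y ^+ 2) ^+ 2 / 8.
Proof.
move=> /andP[A0 A1] /andP[Y0 Y1] A'0 Y'0 hA hY.
have h4 : 0 <= 4 - (A + Y) ^+ 2 by nra.
have := mulr_ge0 (sqr_ge0 (A - Y)) h4.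
have := sqr_ge0 (A' - Y').
nra.
Qed.

Lemma sqrt_facts (R : realType) (a : R) : 0 <= a <= 1 ->
  [/\ 0 <= Num.sqrt a, Num.sqrt a <= 1, Num.sqrt a ^+ 2 = a & 
      Num.sqrt a ^+ 2 + Num.sqrt (1 - a) ^+ 2 = 1].
Proof.
case/andP=> a0 a1.
have a1' : 0 <= 1 - a by rewrite subr_ge0.
split.
- exact: sqrtr_ge0.
- by rewrite -sqrtr1 ler_wsqrtr.
- by rewrite sqr_sqrtr.
- by rewrite !sqr_sqrtr // addrC subrK.
Qed.

Definition tail (R : realType) m (a : R) k : R :=
  \sum_(j < m.+1) (if (k <= j)%N then bin m a j else 0).
Definition ltail (R : realType) m (a : R) k : R :=
  \sum_(j < m.+1) (if (j < k)%N then bin m a j else 0).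

Lemma tail_ltail (R : realType) m (a : R) k : tail m a k + ltail m a k = 1.
Proof.
rewrite /tail /ltail -big_split /= -(sum_bin m a); apply: eq_bigr => j _.
by rewrite ltnNge; case: ifP; rewrite ?addr0 ?add0r.
Qed.

Lemma tail_ge0 (R : realType) m (a : R) k : 0 <= a <= 1 -> 0 <= tail m a k.
Proof. by move=> ha; apply: sumr_ge0 => j _; case: ifP => // _; exact: bin_ge0. Qed.

Lemma ltail_ge0 (R : realType) m (a : R) k : 0 <= a <= 1 -> 0 <= ltail m a k.
Proof. by move=> ha; apply: sumr_ge0 => j _; case: ifP => // _; exact: bin_ge0. Qed.

Lemma tail_le1 (R : realType) m (a : R) k : 0 <= a <= 1 -> tail m a k <= 1.
Proof.
by move=> ha; rewrite -(tail_ltail m a k) lerDl ltail_ge0.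
Qed.

Lemma ltail_le1 (R : realType) m (a : R) k : 0 <= a <= 1 -> ltail m a k <= 1.
Proof.
by move=> ha; rewrite -(tail_ltail m a k) lerDr tail_ge0.
Qed.

Lemma tail_ratio_up (R : realType) m k (a y : R) :
  0 <= a -> a <= y -> 0 < y -> y < 1 -> (k <= m)%N ->
  tail m a k <= (a / y) ^+ k * ((1 - a) / (1 - y)) ^+ (m - k) * tail m y k.
Proof.
move=> a0 ay y0 y1 km.
rewrite /tail mulr_sumr; apply: ler_sum => j _.
case: ifP => kj; last by rewrite mulr0.
have y01 : 0 < y < 1 by rewrite y0 y1.
rewrite (bin_ratio m a j y01) mulrC ler_wpM2r //.
  by apply: bin_ge0; apply/andP; split; apply: ltW.
apply: ratio_mono_up.
- by apply/andP; split; [rewrite divr_ge0 // ltW | rewrite ler_pdivrMr // mul1r].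
- by rewrite ler_pdivlMr ?subr_gt0 // mul1r lerB.
- by rewrite kj /= -ltnS ltn_ord.
Qed.

Lemma ltail_ratio_down (R : realType) m k (a y : R) :
  a <= 1 -> y <= a -> 0 < y -> y < 1 -> (k <= m)%N ->
  ltail m a k <= (a / y) ^+ k * ((1 - a) / (1 - y)) ^+ (m - k) * ltail m y k.
Proof.
move=> a1 ay y0 y1 km.
rewrite /ltail mulr_sumr; apply: ler_sum => j _.
case: ifP => jk; last by rewrite mulr0.
have y01 : 0 < y < 1 by rewrite y0 y1.
rewrite (bin_ratio m a j y01) mulrC ler_wpM2r //.
  by apply: bin_ge0; apply/andP; split; apply: ltW.
apply: ratio_mono_down.
- by rewrite ler_pdivlMr // mul1r.
- apply/andP; split; first by rewrite divr_ge0 // subr_ge0 // ltW.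
  by rewrite ler_pdivrMr ?subr_gt0 // mul1r lerB.
- by rewrite km ltnW.
Qed.

Lemma rho_amgm (R : realType) m k (a y : R) : 0 <= a <= 1 -> 0 < y -> y < 1 ->
  (k <= m)%N -> (0 < m)%N ->
  (a / y) ^+ k * ((1 - a) / (1 - y)) ^+ (m - k) <=
  ((k%:R * (Num.sqrt a / Num.sqrt y) + (m - k)%:R * (Num.sqrt (1 - a) / Num.sqrt (1 - y)))
     / m%:R) ^+ (2 * m).
Proof.
move=> /andP[a0 a1] y0 y1 km m0.
have a1' : 0 <= 1 - a by rewrite subr_ge0.
have y1' : 0 <= 1 - y by rewrite subr_ge0 ltW.
have eu : a / y = (Num.sqrt a / Num.sqrt y) ^+ 2.
  by rewrite expr_div_n !sqr_sqrtr // ltW.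
have ev : (1 - a) / (1 - y) = (Num.sqrt (1 - a) / Num.sqrt (1 - y)) ^+ 2.
  by rewrite expr_div_n !sqr_sqrtr.
rewrite eu ev (exprAC _ 2 k) (exprAC _ 2 (m - k)) -exprMn (mulnC 2 m) exprM.
rewrite lerXn2r // ?nnegrE.
- by rewrite mulr_ge0 // exprn_ge0 // divr_ge0 // sqrtr_ge0.
- by rewrite exprn_ge0 // divr_ge0 // addr_ge0 // mulr_ge0 // divr_ge0 // sqrtr_ge0.
- by apply: amgm2 => //; apply: divr_ge0; exact: sqrtr_ge0.
Qed.

Lemma AM_gen (R : realType) (K M y u v eta : R) : 0 < M -> 0 <= eta ->
  (K - y * M) * (u - v) <= eta * M * (u + v) ->
  (K * u + (M - K) * v) / M <= y * u + (1 - y) * v + eta * (u + v).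
Proof.
move=> M0 e0 h; rewrite ler_pdivrMr //; nra.
Qed.

Lemma AM_up (R : realType) m k (a y eta : R) :
  0 <= a -> a <= y -> 0 < y -> y < 1 -> (0 < m)%N -> (k <= m)%N -> 0 <= eta ->
  (y - eta) * m%:R <= k%:R ->
  (k%:R * (Num.sqrt a / Num.sqrt y) + (m - k)%:R * (Num.sqrt (1 - a) / Num.sqrt (1 - y)))
     / m%:R <= 1 - (y - a) ^+ 2 / 8 + 2 * eta / (1 - y).
Proof.
move=> a0 ay y0 y1 m0 km e0 hk.
have a1 : a <= 1 by rewrite (le_trans ay) // ltW.
have [A0 A1 A2 AA] := sqrt_facts (a:=a) (ltac:(by rewrite a0 a1)).
have [Y0 Y1 Y2 YY] := sqrt_facts (a:=y) (ltac:(by rewrite ltW // ltW)).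
set A := Num.sqrt a in A0 A1 A2 AA *; set Y := Num.sqrt y in Y0 Y1 Y2 YY *.
set A' := Num.sqrt (1 - a) in AA *; set Y' := Num.sqrt (1 - y) in YY *.
have Yp : 0 < Y by rewrite sqrtr_gt0.
have Y'p : 0 < Y' by rewrite sqrtr_gt0 subr_gt0.
have A'0 : 0 <= A' by rewrite sqrtr_ge0.
have AY : A <= Y by rewrite ler_wsqrtr.
have YA' : Y' <= A' by rewrite ler_wsqrtr // lerB.
have A'1 : A' <= 1 by nra.
have Y'1 : Y' <= 1 by nra.
set u := A / Y; set v := A' / Y'.
have eu : Y * u = A by rewrite /u mulrC (divfK (lt0r_neq0 Yp)).
have ev : Y' * v = A' by rewrite /v mulrC (divfK (lt0r_neq0 Y'p)).
have u0 : 0 <= u by rewrite divr_ge0 // ltW.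
have u1 : u <= 1 by rewrite ler_pdivrMr // mul1r.
have v1 : 1 <= v by rewrite ler_pdivlMr // mul1r.
have v0 : 0 <= v by rewrite (le_trans ler01).
have ey : y = Y ^+ 2 by rewrite Y2.
have ey' : 1 - y = Y' ^+ 2 by rewrite -YY ey addrC addKr.
have Mp : 0 < (m%:R : R) by rewrite ltr0n.
rewrite natrB //.
apply: (le_trans (AM_gen (y := y) Mp e0 _)).
  have h1 : 0 <= (k%:R - (y - eta) * m%:R) * (v - u) by apply: mulr_ge0; rewrite subr_ge0 // (le_trans u1 v1).
  have h2 : 0 <= eta * m%:R * u by apply: mulr_ge0 => //; apply: mulr_ge0 => //; exact: ltW.
  have h3 : 0 <= eta * m%:R * v by apply: mulr_ge0 => //; apply: mulr_ge0 => //; exact: ltW.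
  nra.
have hh : y * u + (1 - y) * v = A * Y + A' * Y'.
  by rewrite ey' ey !expr2 -!mulrA eu ev mulrC [A' * _]mulrC.
rewrite hh.
have hb := @hell_alg R A Y A' Y' (ltac:(by rewrite A0 A1)) (ltac:(by rewrite ltW // Y1)) A'0 (ltW Y'p) AA YY.
rewrite A2 Y2 in hb.
have hyа : (a - y) ^+ 2 = (y - a) ^+ 2 by rewrite -sqrrN opprB.
rewrite hyа in hb.
have hv : v <= 1 / (1 - y).
  by rewrite ler_pdivlMr ?subr_gt0 // ey' expr2 mulrA mulrC mulrA [Y' * v]ev; nra.
have hu : u <= 1 / (1 - y).
  apply: (le_trans u1); rewrite ler_pdivlMr ?subr_gt0 // mul1r; lra.
have : eta * (u + v) <= 2 * eta / (1 - y).
  have -> : 2 * eta / (1 - y) = eta * (1 / (1 - y) + 1 / (1 - y)).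
    by rewrite !mul1r; ring.
  by rewrite ler_wpM2l // lerD.
lra.
Qed.

Lemma AM_down (R : realType) m k (a y eta : R) :
  a <= 1 -> y <= a -> 0 < y -> y < 1 -> (0 < m)%N -> (k <= m)%N -> 0 <= eta ->
  k%:R <= (y + eta) * m%:R ->
  (k%:R * (Num.sqrt a / Num.sqrt y) + (m - k)%:R * (Num.sqrt (1 - a) / Num.sqrt (1 - y)))
     / m%:R <= 1 - (a - y) ^+ 2 / 8 + 2 * eta / y.
Proof.
move=> a1 ay y0 y1 m0 km e0 hk.
have a0 : 0 <= a by rewrite (le_trans _ ay) // ltW.
have [A0 A1 A2 AA] := sqrt_facts (a:=a) (ltac:(by rewrite a0 a1)).
have [Y0 Y1 Y2 YY] := sqrt_facts (a:=y) (ltac:(by rewrite ltW // ltW)).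
set A := Num.sqrt a in A0 A1 A2 AA *; set Y := Num.sqrt y in Y0 Y1 Y2 YY *.
set A' := Num.sqrt (1 - a) in AA *; set Y' := Num.sqrt (1 - y) in YY *.
have Yp : 0 < Y by rewrite sqrtr_gt0.
have Y'p : 0 < Y' by rewrite sqrtr_gt0 subr_gt0.
have A'0 : 0 <= A' by rewrite sqrtr_ge0.
have AY : Y <= A by rewrite ler_wsqrtr.
have YA' : A' <= Y' by rewrite ler_wsqrtr // ?lerB // subr_ge0.
have A'1 : A' <= 1 by nra.
have Y'1 : Y' <= 1 by nra.
set u := A / Y; set v := A' / Y'.
have eu : Y * u = A by rewrite /u mulrC (divfK (lt0r_neq0 Yp)).
have ev : Y' * v = A' by rewrite /v mulrC (divfK (lt0r_neq0 Y'p)).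
have v0 : 0 <= v by rewrite divr_ge0 // ltW.
have v1 : v <= 1 by rewrite ler_pdivrMr // mul1r.
have u1 : 1 <= u by rewrite ler_pdivlMr // mul1r.
have u0 : 0 <= u by rewrite (le_trans ler01).
have ey : y = Y ^+ 2 by rewrite Y2.
have ey' : 1 - y = Y' ^+ 2 by rewrite -YY ey addrC addKr.
have Mp : 0 < (m%:R : R) by rewrite ltr0n.
rewrite natrB //.
apply: (le_trans (AM_gen (y := y) Mp e0 _)).
  have h1 : 0 <= ((y + eta) * m%:R - k%:R) * (u - v) by apply: mulr_ge0; rewrite subr_ge0 // (le_trans v1 u1).
  have h3 : 0 <= eta * m%:R * v by apply: mulr_ge0 => //; apply: mulr_ge0 => //; exact: ltW.
  nra.
have hh : y * u + (1 - y) * v = A * Y + A' * Y'.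
  by rewrite ey' ey !expr2 -!mulrA eu ev mulrC [A' * _]mulrC.
rewrite hh.
have hb := @hell_alg R A Y A' Y' (ltac:(by rewrite A0 A1)) (ltac:(by rewrite ltW // Y1)) A'0 (ltW Y'p) AA YY.
rewrite A2 Y2 in hb.
have hu : u <= 1 / y.
  by rewrite ler_pdivlMr // ey expr2 mulrA mulrC mulrA [Y * u]eu; nra.
have hv : v <= 1 / y.
  apply: (le_trans v1); rewrite ler_pdivlMr // mul1r; lra.
have : eta * (u + v) <= 2 * eta / y.
  have -> : 2 * eta / y = eta * (1 / y + 1 / y).
    by rewrite !mul1r; ring.
  by rewrite ler_wpM2l // lerD.
lra.
Qed.

Lemma AM_ge0 (R : realType) m k (a y : R) :
  0 <= (k%:R * (Num.sqrt a / Num.sqrt y) + (m - k)%:R * (Num.sqrt (1 - a) / Num.sqrt (1 - y)))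
     / m%:R.
Proof. by rewrite divr_ge0 // addr_ge0 // mulr_ge0 // divr_ge0 // sqrtr_ge0. Qed.

Lemma tail_bound_up (R : realType) m k (a y eta : R) :
  0 <= a -> a <= y -> 0 < y -> y < 1 -> (0 < m)%N -> (k <= m)%N -> 0 <= eta ->
  (y - eta) * m%:R <= k%:R ->
  tail m a k <= (1 - (y - a) ^+ 2 / 8 + 2 * eta / (1 - y)) ^+ (2 * m) * tail m y k.
Proof.
move=> a0 ay y0 y1 m0 km e0 hk.
have a1 : a <= 1 by rewrite (le_trans ay) // ltW.
apply: (le_trans (tail_ratio_up a0 ay y0 y1 km)).
apply: ler_wpM2r; first by apply: tail_ge0; rewrite !ltW.
apply: (le_trans (@rho_amgm R m k a y (ltac:(by rewrite a0 a1)) y0 y1 km m0)).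
have hAM := AM_up a0 ay y0 y1 m0 km e0 hk.
by rewrite lerXn2r ?nnegrE ?AM_ge0 //; exact: le_trans (AM_ge0 m k a y) hAM.
Qed.

Lemma ltail_bound_down (R : realType) m k (a y eta : R) :
  a <= 1 -> y <= a -> 0 < y -> y < 1 -> (0 < m)%N -> (k <= m)%N -> 0 <= eta ->
  k%:R <= (y + eta) * m%:R ->
  ltail m a k <= (1 - (a - y) ^+ 2 / 8 + 2 * eta / y) ^+ (2 * m) * ltail m y k.
Proof.
move=> a1 ay y0 y1 m0 km e0 hk.
have a0 : 0 <= a by rewrite (le_trans _ ay) // ltW.
apply: (le_trans (ltail_ratio_down a1 ay y0 y1 km)).
apply: ler_wpM2r; first by apply: ltail_ge0; rewrite !ltW.
apply: (le_trans (@rho_amgm R m k a y (ltac:(by rewrite a0 a1)) y0 y1 km m0)).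
have hAM := AM_down a1 ay y0 y1 m0 km e0 hk.
by rewrite lerXn2r ?nnegrE ?AM_ge0 //; exact: le_trans (AM_ge0 m k a y) hAM.
Qed.

Lemma prod_scaleX (R : realType) n (x : 'I_n -> R) (e : 'I_n -> nat) :
  \prod_j (x j *: ('X^(e j) : {poly R})) = (\prod_j x j) *: 'X^(\sum_j e j).
Proof.
rewrite -mul_polyC rmorph_prod -prodrXr -big_split /=.
by apply: eq_bigr => j _; rewrite mul_polyC.
Qed.

Lemma sum_bool_le (n : nat) (a : {ffun 'I_n -> bool}) : (\sum_(j < n) (a j : nat) <= n)%N.
Proof.
apply: (@leq_trans (\sum_(j < n) 1)%N); first by apply: leq_sum => j _; case: (a j).
by rewrite sum1_card card_ord.
Qed.

Lemma ind_coef (R : realType) B n K : (K < n.+1)%N ->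
  (if (B <= K)%N then 1 else 0 : R) =
  \sum_(c < n.+1) (if (B <= c)%N then ('X^K : {poly R})`_c else 0).
Proof.
move=> hK; rewrite (bigD1 (Ordinal hK)) //= big1 ?addr0.
  by rewrite coefXn eqxx; case: ifP.
move=> c /eqP hc; rewrite coefXn; case: ifP => // _.
by case: eqP => // he; case: hc; apply: val_inj.
Qed.

Lemma funded_coef (R : realType) B n (a : {ffun 'I_n -> bool}) :
  (if funded B a then 1 else 0 : R) =
  \sum_(c < n.+1) (if (B <= c)%N then ('X^(\sum_(j < n) (a j : nat)) : {poly R})`_c else 0).
Proof.
have hK : (\sum_(j < n) (a j : nat) < n.+1)%N by rewrite ltnS sum_bool_le.
by rewrite -(ind_coef R B hK).
Qed.

Definition Fp (R : realType) (p : R) n (sigma : 'I_n -> bool -> R) (i : 'I_n) (w : bool)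
  (j : 'I_n) (t b : bool) : {poly R} :=
  (sig_prob p w t * act_prob (sigma j t) b * (if j == i then (if b then 1 else 0) else 1))
    *: 'X^(b : nat).

Lemma coef_sum_scale (R : realType) B n (x : R) (P : {poly R}) :
  \sum_(c < n.+1) (if (B <= c)%N then (x *: P)`_c else 0) =
  x * \sum_(c < n.+1) (if (B <= c)%N then P`_c else 0).
Proof.
rewrite mulr_sumr; apply: eq_bigr => c _; case: ifP => _; by rewrite ?coefZ ?mulr0.
Qed.

Lemma point (R : realType) (p : R) B n (sigma : 'I_n -> bool -> R) (i : 'I_n) w
  (s a : {ffun 'I_n -> bool}) :
  outcome_prob p sigma w s a * payoff R B i w a =
  1 / 2 * (if w then 1 else -1) *
  \sum_(c < n.+1) (if (B <= c)%N then (\prod_j Fp p sigma i w j (s j) (a j))`_c else 0).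
Proof.
rewrite /Fp prod_scaleX coef_sum_scale -funded_coef.
rewrite big_split /= big_split /=.
have -> : \prod_(j < n) (if j == i then (if a j then 1 else 0) else 1) = (if a i then 1 else 0 : R).
  rewrite (bigD1 i) //= eqxx big1 ?mulr1 // => j /negPf ->; done.
rewrite /outcome_prob /payoff.
case: (a i); case: (funded B a); case: w => /=; ring.
Qed.

Lemma distr2 (R : realType) n (G : 'I_n -> bool -> bool -> {poly R}) :
  \prod_j \sum_t \sum_b G j t b =
  \sum_(s : {ffun 'I_n -> bool}) \sum_(a : {ffun 'I_n -> bool}) \prod_j G j (s j) (a j).
Proof.
rewrite (bigA_distr_bigA (fun j t => \sum_b G j t b)) /=.
by apply: eq_bigr => s _; rewrite (bigA_distr_bigA (fun j b => G j (s j) b)).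
Qed.

Lemma exp_payoff_poly (R : realType) (p : R) B n (sigma : 'I_n -> bool -> R) (i : 'I_n) :
  exp_payoff p B sigma i =
  \sum_(w : bool) (1 / 2 * (if w then 1 else -1) *
  \sum_(c < n.+1) (if (B <= c)%N then
       (\prod_j \sum_t \sum_b Fp p sigma i w j t b)`_c else 0)).
Proof.
rewrite /exp_payoff; apply: eq_bigr => w _.
rewrite distr2.
under eq_bigr do under eq_bigr do rewrite point.
under eq_bigr do rewrite -mulr_sumr.
rewrite -mulr_sumr; congr (_ * _).
under eq_bigr do rewrite exchange_big /=.
rewrite exchange_big /=; apply: eq_bigr => c _.
case: ifP => _; last by rewrite !big1.
by rewrite !coef_sum; apply: eq_bigr => s _; rewrite coef_sum.
Qed.

Definition mix (R : realType) (p : R) (w : bool) (tau : bool -> R) : R :=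
  sig_prob p w true * tau true + sig_prob p w false * tau false.

Lemma Fp_other (R : realType) (p : R) n (sigma : 'I_n -> bool -> R) (i j : 'I_n) w :
  j != i ->
  \sum_t \sum_b Fp p sigma i w j t b =
  (1 - mix p w (sigma j))%:P + mix p w (sigma j) *: 'X.
Proof.
move=> /negPf ji.
have hs : sig_prob p w true + sig_prob p w false = 1.
  by rewrite /sig_prob; case: w => /=; lra.
rewrite /Fp ji !big_bool /= /mix.
apply/polyP => c.
rewrite !(coefD, coefZ, coefXn, coefC, coefX) /act_prob.
move: hs; move: (sig_prob p w true) (sig_prob p w false) (sigma j true) (sigma j false) => x y u v hs.
case: c => [|[|c]] /=; rewrite ?mulr0 ?mulr1 ?addr0 ?add0r //.
by rewrite -[in RHS]hs; ring.
Qed.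

Lemma Fp_self (R : realType) (p : R) n (sigma : 'I_n -> bool -> R) (i : 'I_n) w :
  \sum_t \sum_b Fp p sigma i w i t b = mix p w (sigma i) *: 'X.
Proof.
rewrite /Fp eqxx !big_bool /= /mix.
apply/polyP => c.
rewrite !(coefD, coefZ, coefXn, coefC, coefX) /act_prob.
case: c => [|[|c]] /=; rewrite ?mulr0 ?mulr1 ?addr0 ?add0r //.
Qed.

Lemma prod_Fp (R : realType) (p : R) m (sigma : 'I_m.+1 -> bool -> R) (i : 'I_m.+1) w
  (tau0 : bool -> R) : (forall j, j != i -> sigma j = tau0) ->
  \prod_j \sum_t \sum_b Fp p sigma i w j t b =
  (mix p w (sigma i) *: 'X) * ((1 - mix p w tau0)%:P + mix p w tau0 *: 'X) ^+ m.
Proof.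
move=> hs.
rewrite (bigD1 i) //= Fp_self; congr (_ * _).
rewrite (eq_bigr (fun _ => (1 - mix p w tau0)%:P + mix p w tau0 *: 'X)); last first.
  by move=> j ji; rewrite Fp_other // hs.
rewrite prodr_const.
congr (_ ^+ _).
have hc : #|predC1 i| = m by rewrite cardC1 card_ord.
apply: (etrans _ hc); apply: eq_card => j; by rewrite !inE.
Qed.

Lemma coef_binpoly (R : realType) m (al : R) j : (j < m.+1)%N ->
  (((1 - al)%:P + al *: 'X) ^+ m)`_j = bin m al j.
Proof.
move=> hj.
rewrite exprDn coef_sum (bigD1 (Ordinal hj)) //= big1 ?addr0.
  by rewrite coefMn -polyC_exp exprZn coefCM coefZ coefXn eqxx mulr1 /bin mulrC.
move=> c /eqP hc; rewrite coefMn -polyC_exp exprZn coefCM coefZ coefXn.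
case: eqP => [he|]; last by rewrite !mulr0 mul0rn.
by case: hc; apply: val_inj.
Qed.

Lemma tail_poly (R : realType) m B (be al : R) : (1 <= B)%N ->
  \sum_(c < m.+2) (if (B <= c)%N then
     ((be *: 'X) * ((1 - al)%:P + al *: 'X) ^+ m)`_c else 0) = be * tail m al B.-1.
Proof.
move=> B1.
rewrite -scalerAl coef_sum_scale; congr (_ * _).
rewrite big_ord_recl /= leqn0 (negPf (lt0n_neq0 B1)) add0r /tail.
apply: eq_bigr => c _.
rewrite /bump /= add1n coefXM /=.
have -> : (B <= c.+1)%N = (B.-1 <= c)%N by case: B B1.
case: ifP => // _; exact: coef_binpoly.
Qed.

Lemma exp_payoff_formula (R : realType) (p : R) B m (sigma : 'I_m.+1 -> bool -> R) (i : 'I_m.+1)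
  (tau0 : bool -> R) : (1 <= B)%N -> (forall j, j != i -> sigma j = tau0) ->
  exp_payoff p B sigma i =
  1 / 2 * (mix p true (sigma i) * tail m (mix p true tau0) B.-1) -
  1 / 2 * (mix p false (sigma i) * tail m (mix p false tau0) B.-1).
Proof.
move=> B1 hs.
rewrite exp_payoff_poly big_bool /= !(prod_Fp _ _ hs) !tail_poly //.
ring.
Qed.

Lemma equil (R : realType) (p : R) B m (l : R) : (1 <= B)%N ->
  is_lambda p B m.+1 l ->
  (1 - p) * tail m (p + (1 - p) * l) B.-1 <= p * tail m ((1 - p) + p * l) B.-1 /\
  (0 < l -> p * tail m ((1 - p) + p * l) B.-1 <= (1 - p) * tail m (p + (1 - p) * l) B.-1).
Proof.
move=> B1 [/andP[l0 l1] [[_ hbne] _]].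
pose i : 'I_m.+1 := ord0.
pose tau0 : bool -> R := fun s => if s then 1 else l.
pose sig0 := @sym_profile R m.+1 l.
have hsym : forall j, j != i -> sig0 j = tau0 by [].
have hdev : forall tau, forall j, j != i -> deviate (sig0) i tau j = tau0.
  by move=> tau j /negPf ji; rewrite /deviate ji.
have eH : mix p true tau0 = p + (1 - p) * l by rewrite /mix /sig_prob /= mulr1.
have eL : mix p false tau0 = (1 - p) + p * l by rewrite /mix /sig_prob /= mulr1.
have e0 := @exp_payoff_formula R p B m sig0 i tau0 B1 hsym.
have hm : forall w, mix p w (sig0 i) = mix p w tau0 by [].
rewrite !hm eH eL in e0.
set TH := tail m (p + (1 - p) * l) B.-1 in e0 *.
set TL := tail m ((1 - p) + p * l) B.-1 in e0 *.
have vt : forall a b : R, 0 <= a <= 1 -> 0 <= b <= 1 ->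
    valid_strategy (fun s : bool => if s then a else b).
  by move=> a b ha hb [].
have ed : forall a b : R, exp_payoff p B (deviate (sig0) i (fun s : bool => if s then a else b)) i =
   1 / 2 * ((p * a + (1 - p) * b) * TH) - 1 / 2 * (((1 - p) * a + p * b) * TL).
  move=> a b; rewrite (@exp_payoff_formula R p B m _ i tau0 B1 (hdev _)) eH eL /mix /sig_prob /deviate /=.
  rewrite /TH /TL.
  done.
have h1 := hbne i _ (vt 1 1 (ltac:(by rewrite ler01 lexx)) (ltac:(by rewrite ler01 lexx))).
have h2 := hbne i _ (vt 1 0 (ltac:(by rewrite ler01 lexx)) (ltac:(by rewrite lexx ler01))).
rewrite ed e0 in h1; rewrite ed e0 in h2.
split.
  have : 0 <= (1 - l) * (p * TL - (1 - p) * TH) by nra.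
  by rewrite pmulr_rge0 ?subr_gt0 // subr_ge0.
move=> lp.
have : 0 <= l * ((1 - p) * TH - p * TL) by nra.
by rewrite pmulr_rge0 // subr_ge0.
Qed.

Lemma pow_le (R : realType) (b z : R) n : 0 <= b -> b <= z -> b ^+ n <= z ^+ n.
Proof. by move=> b0 bz; rewrite lerXn2r // nnegrE (le_trans b0). Qed.

Lemma mul_div_cancel (R : realType) (p x c : R) : p != 0 -> p * (x / (c * p)) = x / c.
Proof. by move=> hp; rewrite invfM mulrCA [p * (_ * _)]mulrCA mulfV // mulr1. Qed.

Lemma UB_step (R : realType) (p q eps l : R) m k :
  1 / 2 < p -> p < 1 -> 0 <= q -> 0 < eps -> eps <= 1 -> (0 < m)%N -> (k <= m)%N ->
  0 < l -> l < 1 ->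
  p * tail m (1 - p + p * l) k <= (1 - p) * tail m (p + (1 - p) * l) k ->
  k%:R <= (q + p * eps / 2) * m%:R ->
  (1 - (p * eps) ^+ 2 / 32) ^+ (2 * m) <= (2 * p - 1) / (2 * p) ->
  q + p * eps < 1 - p + p * l -> False.
Proof.
move=> p12 p1 q0 e0 e1 m0 km l0 l1 E2 hk hg hl.
have p0 : 0 < p by lra.
set aL := 1 - p + p * l in E2 hl.
set aH := p + (1 - p) * l in E2.
set y := q + p * eps / 2 in hk.
have pe0 : 0 < p * eps by rewrite mulr_gt0.
have aL1 : aL < 1 by rewrite /aL; nra.
have aH01 : 0 <= aH <= 1 by apply/andP; split; rewrite /aH; nra.
have y0 : 0 < y by rewrite /y; lra.
have yaL : y <= aL by rewrite /y; lra.
have y1 : y < 1 by lra.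
have hk' : k%:R <= (y + 0) * m%:R by rewrite addr0.
have hb := ltail_bound_down (ltW aL1) yaL y0 y1 m0 km (lexx 0) hk'.
rewrite mulr0 mul0r addr0 in hb.
have hl1 : ltail m y k <= 1 by apply: ltail_le1; rewrite !ltW.
have hb0 : 0 <= (1 - (aL - y) ^+ 2 / 8) by nra.
have hbz : (1 - (aL - y) ^+ 2 / 8) <= 1 - (p * eps) ^+ 2 / 32.
  have : p * eps / 2 <= aL - y by rewrite /y; lra.
  nra.
have hpw := pow_le (2 * m) hb0 hbz.
have hpw0 : 0 <= (1 - (aL - y) ^+ 2 / 8) ^+ (2 * m) by rewrite exprn_ge0.
have hTL : 1 - (2 * p - 1) / (2 * p) <= tail m aL k.
  have := tail_ltail m aL k.
  have : ltail m aL k <= (2 * p - 1) / (2 * p).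
    apply: (le_trans hb); apply: (le_trans _ hg); apply: (le_trans _ hpw).
    by rewrite -[X in _ <= X]mulr1 ler_wpM2l.
  lra.
have hTH : tail m aH k <= 1 by apply: tail_le1.
have : p * (1 - (2 * p - 1) / (2 * p)) = 1 / 2.
  rewrite mulrBr mulr1 mul_div_cancel ?lt0r_neq0 //; lra.
nra.
Qed.

Lemma tail_pos (R : realType) m (a : R) k : 0 < a -> a <= 1 -> (k <= m)%N -> 0 < tail m a k.
Proof.
move=> a0 a1 km.
rewrite /tail (bigD1 ord_max) //= km.
have h1 : 0 < bin m a m.
  by rewrite /bin subnn expr0 mulr1 binn mulr1n exprn_gt0.
change (is_true (0 < bin m a (nat_of_ord (@ord_max m)))) in h1.
have h2 : 0 <= \sum_(i < m.+1 | i != ord_max) (if (k <= i)%N then bin m a i else 0).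
  by apply: sumr_ge0 => j _; case: ifP => // _; apply: bin_ge0; rewrite ltW.
lra.
Qed.

Lemma LB_step (R : realType) (p q eps l eta : R) m k :
  1 / 2 < p -> p < 1 -> 0 <= q -> q <= 1 -> 0 < eps -> eps <= 1 -> (0 < m)%N -> (k <= m)%N ->
  0 <= l -> l < 1 ->
  (1 - p) * tail m (p + (1 - p) * l) k <= p * tail m (1 - p + p * l) k ->
  1 - p + p * l < q - p * eps -> eps <= 1 - l ->
  eta = ((2 * p - 1) * eps) ^+ 2 * ((1 - p) * eps) / 64 ->
  (q - eta) * m%:R <= k%:R -> k%:R <= (q + eta / 2) * m%:R ->
  (1 - eta ^+ 2 / 32) ^+ (2 * m) <= 1 / 2 ->
  (1 - (p * eps) ^+ 2 / 32) ^+ (2 * m) <= (1 - p) / (4 * p) ->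
  (1 - ((2 * p - 1) * eps) ^+ 2 / 16) ^+ (2 * m) <= (1 - p) / (2 * p) -> False.
Proof.
move=> p12 p1 q0 q1 e0 e1 m0 km l0 l1 E1 hl hle heta hk1 hk2 g1 g2 g3.
have p0 : 0 < p by lra.
set aL := 1 - p + p * l in E1 hl.
set aH := p + (1 - p) * l in E1.
set d := (2 * p - 1) * eps in heta g3.
have d0 : 0 < d by rewrite /d mulr_gt0 // subr_gt0; lra.
have d1 : d <= 1 by rewrite /d; nra.
have e1p : 0 < (1 - p) * eps by rewrite mulr_gt0 // subr_gt0.
have e1p' : (1 - p) * eps <= 1 / 2 by nra.
have eta0 : 0 < eta by rewrite heta; apply: divr_gt0 => //; rewrite mulr_gt0 // exprn_gt0.
have etape : eta <= p * eps / 2.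
  rewrite heta; have : d ^+ 2 <= 1 by rewrite expr_le1 // ltW.
  move=> hd; have : d ^+ 2 * ((1 - p) * eps) <= (1 - p) * eps.
    by rewrite -[X in _ <= X]mul1r ler_wpM2r // ltW.
  nra.
have aH1 : aH < 1 by rewrite /aH; nra.
have aH0 : 0 < aH by rewrite /aH; nra.
have aL0 : 0 < aL by rewrite /aL; nra.
have aLH : aL <= aH by rewrite /aL /aH; nra.
have TH0 : 0 < tail m aH k by apply: tail_pos => //; rewrite ltW.
have THle : tail m aH k <= 1 by apply: tail_le1; rewrite !ltW.
case: (ltrP (q + eta) aH) => hcase.
-
  set y1 := q + eta / 2 in hk2.
  have y10 : 0 < y1 by rewrite /y1; lra.
  have y1a : y1 <= aH by rewrite /y1; lra.
  have y11 : y1 < 1 by lra.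
  have hk' : k%:R <= (y1 + 0) * m%:R by rewrite addr0.
  have hb := ltail_bound_down (ltW aH1) y1a y10 y11 m0 km (lexx 0) hk'.
  rewrite mulr0 mul0r addr0 in hb.
  have hl1 : ltail m y1 k <= 1 by apply: ltail_le1; rewrite !ltW.
  have hb0 : 0 <= (1 - (aH - y1) ^+ 2 / 8) by nra.
  have hbz : (1 - (aH - y1) ^+ 2 / 8) <= 1 - eta ^+ 2 / 32.
    have : eta / 2 <= aH - y1 by rewrite /y1; lra.
    nra.
  have hpw := pow_le (2 * m) hb0 hbz.
  have hpw0 : 0 <= (1 - (aH - y1) ^+ 2 / 8) ^+ (2 * m) by rewrite exprn_ge0.
  have hTH : 1 / 2 <= tail m aH k.
    have := tail_ltail m aH k.
    have : ltail m aH k <= 1 / 2.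
      apply: (le_trans hb); apply: (le_trans _ g1); apply: (le_trans _ hpw).
      by rewrite -[X in _ <= X]mulr1 ler_wpM2l.
    lra.
  set y2 := q - p * eps / 2.
  have y20 : 0 < y2 by rewrite /y2; lra.
  have ay2 : aL <= y2 by rewrite /y2; lra.
  have y21 : y2 < 1 by rewrite /y2; lra.
  have hk'' : (y2 - 0) * m%:R <= k%:R.
    rewrite subr0; apply: le_trans hk1; rewrite ler_wpM2r // /y2; lra.
  have hb2 := tail_bound_up (ltW aL0) ay2 y20 y21 m0 km (lexx 0) hk''.
  rewrite mulr0 mul0r addr0 in hb2.
  have ht1 : tail m y2 k <= 1 by apply: tail_le1; rewrite !ltW.
  have hb20 : 0 <= (1 - (y2 - aL) ^+ 2 / 8) by nra.
  have hbz2 : (1 - (y2 - aL) ^+ 2 / 8) <= 1 - (p * eps) ^+ 2 / 32.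
    have : p * eps / 2 <= y2 - aL by rewrite /y2; lra.
    have : 0 < p * eps by rewrite mulr_gt0.
    nra.
  have hpw2 := pow_le (2 * m) hb20 hbz2.
  have hpw20 : 0 <= (1 - (y2 - aL) ^+ 2 / 8) ^+ (2 * m) by rewrite exprn_ge0.
  have hTL : tail m aL k <= (1 - p) / (4 * p).
    apply: (le_trans hb2); apply: (le_trans _ g2); apply: (le_trans _ hpw2).
    by rewrite -[X in _ <= X]mulr1 ler_wpM2l.
  have : p * ((1 - p) / (4 * p)) = (1 - p) / 4.
    by rewrite mul_div_cancel // lt0r_neq0.
  nra.
-
  have hk' : (aH - 2 * eta) * m%:R <= k%:R.
    apply: le_trans hk1; rewrite ler_wpM2r //; lra.
  have eta0' : 0 <= 2 * eta by lra.
  have hb := tail_bound_up (ltW aL0) aLH aH0 aH1 m0 km eta0' hk'.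
  have hdiff : d <= aH - aL by rewrite /aH /aL /d; nra.
  have hdiff1 : aH - aL <= 1 by rewrite /aH /aL; nra.
  have h1aH : (1 - p) * eps <= 1 - aH by rewrite /aH; nra.
  have hfrac : 2 * (2 * eta) / (1 - aH) <= d ^+ 2 / 16.
    have h1aH' : 0 < 1 - aH by lra.
    rewrite ler_pdivrMr // heta.
    have : 0 <= d ^+ 2 by rewrite sqr_ge0.
    nra.
  have hsq : (aH - aL) ^+ 2 <= 1 by rewrite expr_le1 // subr_ge0.
  have hsq2 : d ^+ 2 <= (aH - aL) ^+ 2 by rewrite lerXn2r // nnegrE ?subr_ge0 // ltW.
  have hb0 : 0 <= 1 - (aH - aL) ^+ 2 / 8 + 2 * (2 * eta) / (1 - aH).
    have : 0 <= 2 * (2 * eta) / (1 - aH) by apply: divr_ge0; lra.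
    lra.
  have hbz : 1 - (aH - aL) ^+ 2 / 8 + 2 * (2 * eta) / (1 - aH) <= 1 - d ^+ 2 / 16.
    lra.
  have hpw := pow_le (2 * m) hb0 hbz.
  have hTL : tail m aL k <= (1 - p) / (2 * p) * tail m aH k.
    apply: (le_trans hb); apply: ler_wpM2r; first exact: ltW.
    exact: le_trans hpw g3.
  have : p * ((1 - p) / (2 * p)) = (1 - p) / 2.
    by rewrite mul_div_cancel // lt0r_neq0.
  nra.
Qed.

Import numFieldNormedType.Exports.
Local Open Scope classical_set_scope.
Local Open Scope ring_scope.

Lemma geo (R : realType) (z t : R) : 0 <= z -> z < 1 -> 0 < t ->
  exists N, forall m, (N <= m)%N -> z ^+ (2 * m) <= t.
Proof.
move=> z0 z1 t0.
have hz : `|z| < 1 by rewrite ger0_norm.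
have [N _ HN] := (cvgrPdist_le _ _).1 (cvg_expr hz) t t0.
exists N => m hm.
have := HN m hm; rewrite /= sub0r normrN ger0_norm ?exprn_ge0 // => h.
apply: le_trans h.
have -> : (2 * m = m + m)%N by lia.
rewrite exprD -[X in _ <= X]mulr1 ler_wpM2l ?exprn_ge0 //.
exact: exprn_ile1 z0 (ltW z1).
Qed.

Lemma kbounds (R : realType) (B : nat -> nat) (q : R) : 0 <= q -> q <= 1 ->
  (forall n : nat, (0 < n)%N -> (1 <= B n <= n)%N) ->
  (fun n : nat => (B n)%:R / n%:R : R) @ \oo --> q ->
  forall d : R, 0 < d -> exists N, forall m, (N <= m)%N ->
    (q - d) * m%:R <= ((B m.+1).-1)%:R /\ ((B m.+1).-1)%:R <= (q + d) * m%:R.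
Proof.
move=> q0 q1 hB hlim d d0.
have d20 : 0 < d / 2 by rewrite divr_gt0.
have [N0 _ HN0] := (cvgrPdist_le _ _).1 hlim (d / 2) d20.
have [N1 _ HN1] := nbhs_infty_ger (2 / d + 1).
exists (maxn N0 (maxn N1 1)) => m hm.
have hm0 : (N0 <= m.+1)%N by apply: leq_trans (leqnSn m); apply: leq_trans hm; apply: leq_maxl.
have hm1 : (N1 <= m)%N by apply: leq_trans hm; apply: leq_trans (leq_maxr _ _); apply: leq_maxl.
have hm2 : (1 <= m)%N by apply: leq_trans hm; apply: leq_trans (leq_maxr _ _); apply: leq_maxr.
have := HN0 _ hm0; rewrite /= => hq.
have hmr := HN1 _ hm1; rewrite /= in hmr.
have /andP[b1 bn] := hB m.+1 (ltn0Sn m).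
have hk : ((B m.+1).-1)%:R = (B m.+1)%:R - 1 :> R.
  by rewrite -{2}(prednK b1) -natr1 addrK.
rewrite hk.
set b := (B m.+1)%:R : R in hq *.
have n0 : 0 < (m.+1)%:R :> R by rewrite ltr0n.
have hm2r : 1 <= m%:R :> R by rewrite ler1n.
have hn : (m.+1)%:R = m%:R + 1 :> R by rewrite -natr1.
have hq' : `|q - b / (m.+1)%:R| <= d / 2 by [].
have hq1 : - (d / 2) <= q - b / (m.+1)%:R by move: hq'; rewrite ler_norml => /andP[].
have hq2 : q - b / (m.+1)%:R <= d / 2 by move: hq'; rewrite ler_norml => /andP[].
have e1 : b <= (q + d / 2) * (m.+1)%:R.
  rewrite -ler_pdivrMr //; move: hq1 hq2; move: (b / _) => r; lra.
have e2 : (q - d / 2) * (m.+1)%:R <= b.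
  rewrite -ler_pdivlMr //; move: hq1 hq2; move: (b / _) => r; lra.
rewrite hn in e1 e2.
have hmd : 2 / d + 1 <= m%:R by [].
have hmd' : 2 + d <= d * m%:R.
  have := ler_wpM2l (ltW d0) hmd; rewrite mulrDr mulr1 mulrCA divff ?mulr1 //.
  by rewrite lt0r_neq0.
clear hq hq' hq1 hq2 HN0 HN1 hmd.
move: e1 e2 hmd' hm2r; move: (m%:R : R) => x; move: b => bb *.
split; nra.
Qed.

Unset Implicit Arguments. Set Strict Implicit. Set Printing Implicit Defensive.

Theorem lemma2 (R : realType) (p : R) (hp : 1 / 2 < p < 1)
  (B : nat -> nat) (q : R) (hq : 0 <= q <= 1)
  (hB : forall n : nat, (0 < n)%N -> (1 <= B n <= n)%N)
  (hlim : (fun n : nat => (B n)%:R / n%:R : R) @ \oo --> q)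
  (lambda : nat -> nat -> R)
  (hlambda : forall Bn n : nat, (1 <= Bn <= n)%N -> is_lambda p Bn n (lambda Bn n)) :
  (fun n : nat => lambda (B n) n) @ \oo -->
    (if q <= 1 - p then 0 else (q - (1 - p)) / p).
Proof.
move: hp => /andP[p12 p1].
move: hq => /andP[q0 q1].
have p0 : 0 < p by lra.
set L := if q <= 1 - p then 0 else (q - (1 - p)) / p.
have [L0 L1 Lq Lq'] : [/\ 0 <= L, L <= 1, q <= 1 - p + p * L &
    (~~ (q <= 1 - p) -> 1 - p + p * L = q)].
  rewrite /L; case: ifP => hqp.
    split; [by [] | lra | by rewrite mulr0 addr0 | by []].
  have hpl : p * ((q - (1 - p)) / p) = q - (1 - p).
    by rewrite mulrC divfK // lt0r_neq0.
  have : 1 - p < q by rewrite ltNge hqp.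
  move=> hqp'; split.
  - by apply: divr_ge0; lra.
  - by rewrite ler_pdivrMr //; lra.
  - by rewrite hpl; lra.
  - by move=> _; rewrite hpl; lra.
have facts : forall m : nat,
   [/\ 0 <= lambda (B m.+1) m.+1, lambda (B m.+1) m.+1 < 1, ((B m.+1).-1 <= m)%N,
    (1 - p) * tail m (p + (1 - p) * lambda (B m.+1) m.+1) (B m.+1).-1 <=
      p * tail m ((1 - p) + p * lambda (B m.+1) m.+1) (B m.+1).-1 &
    (0 < lambda (B m.+1) m.+1 ->
      p * tail m ((1 - p) + p * lambda (B m.+1) m.+1) (B m.+1).-1 <=
      (1 - p) * tail m (p + (1 - p) * lambda (B m.+1) m.+1) (B m.+1).-1)].
  move=> m.
  have hb := hB m.+1 (ltn0Sn m).
  have hl := hlambda _ _ hb.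
  have /andP[b1 bn] := hb.
  have [E1 E2] := equil b1 hl.
  have [/andP[l0 l1] _] := hl.
  split => //.
  by rewrite -ltnS prednK.
apply/cvgrPdist_le => eps eps0.
have [e [e0 e1 ee]] : exists e : R, [/\ 0 < e, e <= 1 & e <= eps].
  case: (lerP eps 1) => h; [exists eps | exists 1]; split => //; lra.
have pe0 : 0 < p * e by rewrite mulr_gt0.
have pe1 : p * e <= 1 by nra.
have [N1 HN1] : exists N, forall m, (N <= m)%N ->
    (1 - (p * e) ^+ 2 / 32) ^+ (2 * m) <= (2 * p - 1) / (2 * p).
  apply: geo.
  - have : (p * e) ^+ 2 <= 1 by rewrite expr_le1 // ltW.
    lra.
  - have : 0 < (p * e) ^+ 2 by rewrite exprn_gt0.
    lra.
  - by apply: divr_gt0; lra.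
have [N2 HN2] := kbounds q0 q1 hB hlim (d := p * e / 2) (ltac:(by apply: divr_gt0)).
have UB : forall m, (maxn N1 (maxn N2 1) <= m)%N -> lambda (B m.+1) m.+1 <= L + e.
  move=> m hm.
  have hm1 : (N1 <= m)%N by apply: leq_trans hm; apply: leq_maxl.
  have hm2 : (N2 <= m)%N by apply: leq_trans hm; apply: leq_trans (leq_maxr _ _); apply: leq_maxl.
  have hm0 : (0 < m)%N by apply: leq_trans hm; apply: leq_trans (leq_maxr _ _); apply: leq_maxr.
  have [l0 l1 km E1 E2] := facts m.
  rewrite leNgt; apply/negP => hl.
  have lpos : 0 < lambda (B m.+1) m.+1 by lra.
  have [_ hk] := HN2 m hm2.
  apply: (UB_step p12 p1 q0 e0 e1 hm0 km lpos l1 (E2 lpos) hk (HN1 m hm1)).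
  have : p * (L + e) < p * lambda (B m.+1) m.+1 by rewrite ltr_pM2l.
  lra.
set NU := maxn N1 (maxn N2 1).
have [NL LB] : exists N, ~~ (q <= 1 - p) -> forall m, (N <= m)%N ->
    L - e <= lambda (B m.+1) m.+1.
  case: (boolP (q <= 1 - p)) => hqp; first by exists 0%N.
  have hq' := Lq' hqp.
  set d := (2 * p - 1) * e.
  have d0 : 0 < d by rewrite /d mulr_gt0 // subr_gt0; lra.
  have d1 : d <= 1 by rewrite /d; nra.
  set eta := d ^+ 2 * ((1 - p) * e) / 64.
  have f0 : 0 < (1 - p) * e by rewrite mulr_gt0 // subr_gt0.
  have f1 : (1 - p) * e <= 1 by nra.
  have dd1 : d ^+ 2 <= 1 by rewrite expr_le1 // ltW.
  have eta0 : 0 < eta by rewrite /eta; apply: divr_gt0 => //; rewrite mulr_gt0 // exprn_gt0.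
  have eta1 : eta <= 1.
    have : d ^+ 2 * ((1 - p) * e) <= 1.
      by have := ler_pM (sqr_ge0 d) (ltW f0) dd1 f1; rewrite mulr1.
    rewrite /eta; lra.
  have [M1 HM1] : exists N, forall m, (N <= m)%N -> (1 - eta ^+ 2 / 32) ^+ (2 * m) <= 1 / 2.
    apply: geo.
    - have : eta ^+ 2 <= 1 by rewrite expr_le1 // ltW.
      lra.
    - have : 0 < eta ^+ 2 by rewrite exprn_gt0.
      lra.
    - lra.
  have [M2 HM2] : exists N, forall m, (N <= m)%N ->
      (1 - (p * e) ^+ 2 / 32) ^+ (2 * m) <= (1 - p) / (4 * p).
    apply: geo.
    - have : (p * e) ^+ 2 <= 1 by rewrite expr_le1 // ltW.
      lra.
    - have : 0 < (p * e) ^+ 2 by rewrite exprn_gt0.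
      lra.
    - by apply: divr_gt0; lra.
  have [M3 HM3] : exists N, forall m, (N <= m)%N ->
      (1 - d ^+ 2 / 16) ^+ (2 * m) <= (1 - p) / (2 * p).
    apply: geo.
    - lra.
    - have : 0 < d ^+ 2 by rewrite exprn_gt0.
      lra.
    - by apply: divr_gt0; lra.
  have [M4 HM4] := kbounds q0 q1 hB hlim (d := eta / 2) (ltac:(by apply: divr_gt0)).
  exists (maxn (maxn M1 M2) (maxn M3 (maxn M4 1))) => _ m hm.
  have hm1 : (M1 <= m)%N by move: hm; rewrite !geq_max => /andP[/andP[]].
  have hm2 : (M2 <= m)%N by move: hm; rewrite !geq_max => /andP[/andP[]].
  have hm3 : (M3 <= m)%N by move: hm; rewrite !geq_max => /andP[_ /andP[]].
  have hm4 : (M4 <= m)%N by move: hm; rewrite !geq_max => /andP[_ /andP[_ /andP[]]].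
  have hm0 : (0 < m)%N by move: hm; rewrite !geq_max => /andP[_ /andP[_ /andP[]]].
  have [l0 l1 km E1 E2] := facts m.
  rewrite leNgt; apply/negP => hl.
  have [hk1 hk2] := HM4 m hm4.
  have hk1' : (q - eta) * m%:R <= ((B m.+1).-1)%:R.
    apply: le_trans hk1; rewrite ler_wpM2r //; lra.
  have hlt : p * lambda (B m.+1) m.+1 < p * (L - e) by rewrite ltr_pM2l.
  apply: (LB_step p12 p1 q0 q1 e0 e1 hm0 km l0 l1 E1 _ _ (erefl _) hk1' hk2
            (HM1 m hm1) (HM2 m hm2) (HM3 m hm3)).
  - lra.
  - lra.
case: (boolP (q <= 1 - p)) => hqp.
  have L00 : L = 0 by rewrite /L hqp.
  exists NU.+1 => // n /= hn; case: n hn => [//|m] hm.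
  have hmU : (NU <= m)%N by [].
  have := UB m hmU; have [l0 _ _ _ _] := facts m.
  rewrite L00 sub0r normrN ger0_norm //; lra.
exists (maxn NU NL).+1 => // n /= hn; case: n hn => [//|m] hm.
have hmU : (NU <= m)%N by move: hm; rewrite ltnS geq_max => /andP[].
have hmL : (NL <= m)%N by move: hm; rewrite ltnS geq_max => /andP[].
have := UB m hmU; have := LB hqp m hmL.
rewrite ler_norml; move=> h1 h2; apply/andP; split; lra.
Qed.
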